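(* Let $R$ be a commutative noetherian ring. Then every factor ring of $R$ has the property that all its modules of finite length are homomorphic images of injective modules if and only if every factor ring of $R$ is QF.
   Context: A ring is QF if it is noetherian and self-injective. A ring all of whose factor rings are QF is called super QF. *)

(* Defs.v *)
From HB Require Import structures.
From mathcomp Require Import all_boot all_algebra.
Set Implicit Arguments. Unset Strict Implicit. Unset Printing Implicit Defensive.
Import GRing.Theory.
Local Open Scope ring_scope.

Definition is_ideal (S : comNzRingType) (I : S -> Prop) : Prop :=
  [/\ I 0, (forall x y, I x -> I y -> I (x + y)) & (forall a x, I x -> I (a * x))].

Definition noetherian (S : comNzRingType) : Prop :=
  forall I : nat -> S -> Prop,
    (forall n, is_ideal (I n)) ->
    (forall n x, I n x -> I n.+1 x) ->
    exists N, forall n, (N <= n)%N -> forall x, I n x <-> I N x.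

Definition injective_module (S : comNzRingType) (E : lmodType S) : Prop :=
  forall (A B : lmodType S) (f : {linear A -> B}) (g : {linear A -> E}),
    injective f -> exists h : {linear B -> E}, forall a, h (f a) = g a.

Definition is_submodule (S : comNzRingType) (M : lmodType S) (N : M -> Prop) : Prop :=
  [/\ N 0, (forall x y, N x -> N y -> N (x + y)) & (forall (a : S) x, N x -> N (a *: x))].

Definition strict_subset (T : Type) (P Q : T -> Prop) : Prop :=
  (forall x, P x -> Q x) /\ exists x, Q x /\ ~ P x.

Definition finite_length (S : comNzRingType) (M : lmodType S) : Prop :=
  exists n : nat, forall (k : nat) (N : nat -> M -> Prop),
    (forall i, (i <= k)%N -> is_submodule (N i)) ->
    (forall i, (i < k)%N -> strict_subset (N i) (N i.+1)) ->
    (k <= n)%N.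

Definition fl_images_of_injectives (S : comNzRingType) : Prop :=
  forall M : lmodType S, finite_length M ->
    exists (E : lmodType S) (p : {linear E -> M}),
      injective_module E /\ (forall m, exists e, p e = m).

Definition self_injective (S : comNzRingType) : Prop := injective_module S^o.

Definition QF (S : comNzRingType) : Prop := noetherian S /\ self_injective S.

(* Main.v *)
Require Import Defs.
From HB Require Import structures.
From mathcomp Require Import all_boot all_algebra.
From mathcomp Require Import boolp.
From mathcomp Require Import ring_quotient generic_quotient.
Set Implicit Arguments. Unset Strict Implicit. Unset Printing Implicit Defensive.
Import GRing.Theory.
Local Open Scope ring_scope.


Section Quot.
Local Open Scope quotient_scope.
Variables (S : comNzRingType) (I : S -> Prop).
Hypothesis HI : is_ideal I.
Hypothesis HP : ~ I 1.

Definition bI : {pred S} := fun x => `[< I x >].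

Lemma bI_closed : idealr_closed bI.
Proof.
case: HI => I0 ID IM; split.
- by apply/asboolP.
- by apply/asboolP.
- by move=> a u v /asboolP Hu /asboolP Hv; apply/asboolP; apply: ID => //; apply: IM.
Qed.

HB.instance Definition _ := isIdealr.Build S bI bI_closed.

Definition QT := {ideal_quot bI}.
Definition piQ (x : S) : QT := \pi_QT x.

Lemma piQ_eq x y : (piQ x = piQ y) <-> I (x - y).
Proof.
rewrite /piQ; split.
- by move/eqP; rewrite -Quotient.idealrBE => /asboolP.
- by move=> H; apply/eqP; rewrite -Quotient.idealrBE; apply/asboolP.
Qed.

Lemma piQ0 x : (piQ x = 0) <-> I x.
Proof. have -> : (0 : QT) = piQ 0 by rewrite /piQ pi_zeror.
  by rewrite piQ_eq subr0. Qed.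

Lemma piQ_surj (t : QT) : piQ (repr t) = t.
Proof. by rewrite /piQ reprK. Qed.

Lemma piQ_zmod : zmod_morphism piQ.
Proof. by move=> x y; rewrite /piQ Quotient.pi_add Quotient.pi_opp. Qed.

Lemma piQ_monoid : monoid_morphism piQ.
Proof. by split; [rewrite /piQ pi_oner | move=> x y; rewrite /piQ Quotient.pi_mul]. Qed.

HB.instance Definition _ := GRing.isZmodMorphism.Build S QT piQ piQ_zmod.
HB.instance Definition _ := GRing.isMonoidMorphism.Build S QT piQ piQ_monoid.

End Quot.

Lemma comp_surj (R S T : comNzRingType) (phi : {rmorphism R -> S}) (psi : {rmorphism S -> T}) :
  (forall s, exists r, phi r = s) -> (forall t, exists s, psi s = t) ->
  forall t, exists r, (psi \o phi) r = t.
Proof. move=> h1 h2 t; have [s <-] := h2 t; have [r <-] := h1 s; by exists r. Qed.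


Section Len.
Variable S : comNzRingType.
Implicit Types (I J K L : S -> Prop).

Definition sub I J := forall x, I x -> J x.
Definition chain_in J K (k : nat) (N : nat -> S -> Prop) :=
  (forall i, (i <= k)%N -> [/\ is_ideal (N i), sub J (N i) & sub (N i) K]) /\
  (forall i, (i < k)%N -> strict_subset (N i) (N i.+1)).
Definition bnd J K n := forall k N, chain_in J K k N -> (k <= n)%N.
Definition fl J K := exists n, bnd J K n.
Definition full : S -> Prop := fun _ => True.
Definition interI I J : S -> Prop := fun x => I x /\ J x.
Definition sumI I J : S -> Prop := fun x => exists a b, [/\ I a, J b & x = a + b].
Definition addI I (a : S) : S -> Prop := fun x => exists i t, I i /\ x = i + a * t.
Definition colon I (a : S) : S -> Prop := fun x => I (a * x).

Lemma idealN I x : is_ideal I -> I x -> I (- x).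
Proof. by case=> _ _ IM Ix; rewrite -mulN1r; apply: IM. Qed.

Lemma interI_ideal I J : is_ideal I -> is_ideal J -> is_ideal (interI I J).
Proof.
case=> I0 ID IM [J0 JD JM]; split; first by split.
- by move=> x y [??] [??]; split; [apply: ID|apply: JD].
- by move=> a x [??]; split; [apply: IM|apply: JM].
Qed.

Lemma sumI_ideal I J : is_ideal I -> is_ideal J -> is_ideal (sumI I J).
Proof.
case=> I0 ID IM [J0 JD JM]; split.
- by exists 0, 0; rewrite addr0.
- move=> x y [a [b [Ia Jb ->]]] [c [d [Ic Jd ->]]]; exists (a + c), (b + d).
  by split; [apply: ID|apply: JD|rewrite addrACA].
- move=> r x [a [b [Ia Jb ->]]]; exists (r * a), (r * b).
  by split; [apply: IM|apply: JM|rewrite mulrDr].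
Qed.

Lemma addI_ideal I a : is_ideal I -> is_ideal (addI I a).
Proof.
case=> I0 ID IM; split.
- by exists 0, 0; rewrite mulr0 addr0.
- move=> x y [i [t [Ii ->]]] [j [u [Ij ->]]]; exists (i + j), (t + u).
  by split; [apply: ID|rewrite mulrDr addrACA].
- move=> r x [i [t [Ii ->]]]; exists (r * i), (r * t).
  by split; [apply: IM|rewrite mulrDr mulrCA].
Qed.

Lemma colon_ideal I a : is_ideal I -> is_ideal (colon I a).
Proof.
case=> I0 ID IM; split.
- by rewrite /colon mulr0.
- by move=> x y; rewrite /colon mulrDr; apply: ID.
- by move=> r x; rewrite /colon mulrCA; apply: IM.
Qed.

Lemma chain_prefix J K k N : chain_in J K k.+1 N -> chain_in J K k N.
Proof. by case=> H1 H2; split=> i Hi; [apply: H1; apply: leqW|apply: H2; apply: ltnW]. Qed.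

Definition ext (N : nat -> S -> Prop) p (X : S -> Prop) : nat -> S -> Prop :=
  fun i => if (i <= p)%N then N i else X.

Lemma chain_ext J K p N X : chain_in J K p N ->
  [/\ is_ideal X, sub J X & sub X K] -> strict_subset (N p) X ->
  chain_in J K p.+1 (ext N p X).
Proof.
case=> H1 H2 HX Hs; split=> i Hi; rewrite /ext.
- by case: ifP => Hip; [apply: H1|].
- rewrite ltnS in Hi; rewrite Hi; case: ifP => Hip.
  + by apply: H2.
  + by have /eqP -> : i == p by rewrite eqn_leq Hi leqNgt Hip.
Qed.

Lemma split_chain J K L k N : is_ideal J -> is_ideal K -> is_ideal L ->
  sub J K -> sub K L -> chain_in J L k N ->
  exists p q C D, [/\ p + q = k, chain_in J K p C, chain_in K L q D,
    sub (C p) (interI (N k) K) & sub (D q) (sumI (N k) K)]%N.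
Proof.
move=> HJ HK HL JK KL; elim: k => [|k IH] Hc.
- exists 0%N, 0%N, (fun _ => interI (N 0%N) K), (fun _ => sumI (N 0%N) K).
  case: Hc => H1 _; have [HN0 JN0 N0L] := H1 0%N (leqnn _).
  split=> //.
  + split=> // i _; split; first exact: interI_ideal.
    * by move=> x Jx; split; [apply: JN0|apply: JK].
    * by move=> x [].
  + split=> // i _; split; first exact: sumI_ideal.
    * by move=> x Kx; exists 0, x; split => //; [case: HN0|rewrite add0r].
    * case: HL => _ LD _.
      by move=> x [a [b [Na Kb ->]]]; apply: LD; [apply: N0L|apply: KL].
- have [p [q [C [D [Hpq HC HD HCp HDq]]]]] := IH (chain_prefix Hc).
  case: Hc => H1 H2.
  have [HNk JNk NkL] := H1 k (leqW (leqnn _)).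
  have [HNk1 JNk1 Nk1L] := H1 k.+1 (leqnn _).
  have [sNk [y [Ny1 Ny]]] := H2 k (leqnn _).
  have [[x [[Nx Kx] nNx]] | nex] :=
    pselect (exists x, (N k.+1 x /\ K x) /\ ~ N k x).
  + exists p.+1, q, (ext C p (interI (N k.+1) K)), D; split => //.
    * by rewrite addSn Hpq.
    * apply: chain_ext => //.
      - split; first exact: interI_ideal.
        + by move=> z Jz; split; [apply: JNk1|apply: JK].
        + by move=> z [].
      - split.
        + by move=> z /HCp [Nz Kz]; split => //; apply: sNk.
        + by exists x; split => // /HCp [].
    * by move=> z; rewrite /ext ltnn.
    * by move=> z /HDq [a [b [Na Kb ->]]]; exists a, b; split => //; apply: sNk.
  + exists p, q.+1, C, (ext D q (sumI (N k.+1) K)); split => //.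
    * by rewrite addnS Hpq.
    * apply: chain_ext => //.
      - split; first exact: sumI_ideal.
        + by move=> z Kz; exists 0, z; split => //; [case: HNk1|rewrite add0r].
        + case: HL => _ LD _.
          by move=> z [a [b [Na Kb ->]]]; apply: LD; [apply: Nk1L|apply: KL].
      - split.
        + by move=> z /HDq [a [b [Na Kb ->]]]; exists a, b; split => //; apply: sNk.
        + exists y; split; first by exists y, 0; split => //; [case: HK|rewrite addr0].
          move=> /HDq [a [b [Na Kb Hy]]].
          have Nb : N k b.
            apply: contrapT => nNb; apply: nex; exists b; split => //; split => //.
            have -> : b = y + (- a) by rewrite Hy addrAC subrr add0r.
            have [_ ND _] := HNk1; apply: ND => //; apply: idealN => //; exact: sNk.
          by apply: Ny; rewrite Hy; case: HNk => _ ND _; apply: ND.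
    * by move=> z /HCp [Nz Kz]; split => //; apply: sNk.
    * by move=> z; rewrite /ext ltnn.
Qed.

Lemma fl_split J K L : is_ideal J -> is_ideal K -> is_ideal L ->
  sub J K -> sub K L -> fl J K -> fl K L -> fl J L.
Proof.
move=> HJ HK HL JK KL [n1 B1] [n2 B2]; exists (n1 + n2)%N => k N Hc.
have [p [q [C [D [<- HC HD _ _]]]]] := split_chain HJ HK HL JK KL Hc.
by apply: leq_add; [apply: B1 HC|apply: B2 HD].
Qed.

Lemma fl_colon I a : is_ideal I -> fl (colon I a) full -> fl I (addI I a).
Proof.
move=> HI [n B]; exists n => k N [H1 H2]; apply: (B k (fun i => colon (N i) a)).
split=> i Hi.
- have [HN IN NL] := H1 i Hi; split; first exact: colon_ideal.
  + by move=> x; rewrite /colon => Ix; apply: IN.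
  + by [].
- have [HN IN NL] := H1 i (ltnW Hi).
  have [sN [y [Ny1 Ny]]] := H2 i Hi; split.
  + by move=> x; rewrite /colon => Nx; apply: sN.
  + have [HN1 IN1 NL1] := H1 i.+1 Hi.
    have [j [t [Ij Hy]]] := NL1 y Ny1; exists t; split.
    * rewrite /colon; have -> : a * t = y + - j by rewrite Hy addrAC subrr add0r.
      have [_ ND _] := HN1; apply: ND => //; apply: idealN => //; exact: IN1.
    * rewrite /colon => Nt; apply: Ny; rewrite Hy; case: HN => _ ND _.
      by apply: ND => //; apply: IN.
Qed.

Lemma bnd_field I : is_ideal I -> (forall a, ~ I a -> forall s, addI I a s) -> bnd I full 1.
Proof.
move=> HI Hf k N [H1 H2]; rewrite leqNgt; apply/negP => Hk.
have [sN0 [y [Ny1 Ny0]]] := H2 0%N (ltn_trans (ltnSn 0) Hk).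
have [_ [z [Nz2 Nz1]]] := H2 1%N Hk.
have [HN0 IN0 _] := H1 0%N (leq0n _).
have [HN1 IN1 _] := H1 1%N (ltnW Hk).
have nIy : ~ I y by move=> /IN0.
apply: Nz1; have [i [t [Ii ->]]] := Hf y nIy z.
case: HN1 => _ ND NM; apply: ND; first exact: IN1.
by rewrite mulrC; apply: NM.
Qed.

Lemma bnd_full : bnd full full 0.
Proof.
move=> k N [H1 H2]; case: k H1 H2 => // k H1 H2.
have [_ [y [_ Ny]]] := H2 0%N (ltn0Sn _).
by have [_ F _] := H1 0%N (leq0n _); case: Ny; apply: F.
Qed.

End Len.

Lemma noeth_max (S : comNzRingType) : noetherian S ->
  forall P : (S -> Prop) -> Prop, (exists I, is_ideal I /\ P I) ->
  exists I, [/\ is_ideal I, P I & forall J, is_ideal J -> sub I J -> P J -> sub J I].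
Proof.
move=> HN P [I0 H0]; apply: contrapT => Hn.
have step : forall I : {I : S -> Prop | is_ideal I /\ P I},
    exists J : {I : S -> Prop | is_ideal I /\ P I},
      sub (sval I) (sval J) /\ ~ sub (sval J) (sval I).
  move=> [I [HI PI]]; apply: contrapT => HJ; apply: Hn; exists I; split => //.
  move=> J HJi IJ PJ; apply: contrapT => nJI; apply: HJ.
  by exists (exist _ J (conj HJi PJ)).
pose next (I : {I : S -> Prop | is_ideal I /\ P I}) := sval (cid (step I)).
have nextP I : sub (sval I) (sval (next I)) /\ ~ sub (sval (next I)) (sval I).
  by rewrite /next; case: cid.
pose sq n := iter n next (exist _ I0 H0).
have [N HNn] := HN (fun n => sval (sq n)) (fun n => proj1 (svalP (sq n)))
  (fun n x => (nextP (sq n)).1 x).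
have := (nextP (sq N)).2; apply => x Hx.
by apply/(HNn N.+1 (leqnSn _)).
Qed.

Lemma noeth_image (R S : comNzRingType) (phi : {rmorphism R -> S}) :
  (forall s, exists r, phi r = s) -> noetherian R -> noetherian S.
Proof.
move=> Hs HR I HI Hinc.
have H1 : forall n, is_ideal (fun r => I n (phi r)).
  move=> n; have [I0 ID IM] := HI n; split.
  + by rewrite rmorph0.
  + by move=> x y Hx Hy; rewrite rmorphD; apply: ID.
  + by move=> a x Hx; rewrite rmorphM; apply: IM.
have [N HN] := HR (fun n r => I n (phi r)) H1 (fun n x => Hinc n (phi x)).
exists N => n Hn x; have [r <-] := Hs x; exact: HN.
Qed.

Section Modr.
Variables (A B : comNzRingType) (f : {rmorphism A -> B}).
Definition modr : Type := (fun _ : {rmorphism A -> B} => B) f.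
HB.instance Definition _ := GRing.Zmodule.on modr.
Definition modr_scale (a : A) (b : modr) : modr := (f a * (b : B) : B).
Lemma modr_sA a b v : modr_scale a (modr_scale b v) = modr_scale (a * b) v.
Proof. by rewrite /modr_scale rmorphM mulrA. Qed.
Lemma modr_s1 : left_id 1 modr_scale.
Proof. by move=> v; rewrite /modr_scale rmorph1 mul1r. Qed.
Lemma modr_sDr : right_distributive modr_scale +%R.
Proof. by move=> a u v; rewrite /modr_scale mulrDr. Qed.
Lemma modr_sDl v : {morph modr_scale^~ v: a b / a + b}.
Proof. by move=> a b; rewrite /modr_scale rmorphD mulrDl. Qed.
HB.instance Definition _ := GRing.Zmodule_isLmodule.Build A modr modr_sA modr_s1 modr_sDr modr_sDl.
Lemma modr_scaleE a (b : modr) : a *: b = (f a * (b : B) : B).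
Proof. by []. Qed.
End Modr.

Section Lin.
Variables (T : comNzRingType) (x : T).
Definition mulx : T^o -> T^o := fun t => x * t.
Lemma mulx_lin : linear mulx.
Proof. by move=> a u v; rewrite /mulx /GRing.scale /= mulrDr mulrCA. Qed.
HB.instance Definition _ := GRing.isLinear.Build T T^o T^o *:%R mulx mulx_lin.
Variables (E : lmodType T) (e : E).
Definition scalev : T^o -> E := fun t => t *: e.
Lemma scalev_lin : linear scalev.
Proof. by move=> a u v; rewrite /scalev scalerDl scalerA. Qed.
HB.instance Definition _ := GRing.isLinear.Build T T^o E *:%R scalev scalev_lin.
End Lin.

Section Lift.
Variables (S : comNzRingType) (I J : S -> Prop).
Hypotheses (HI : is_ideal I) (HP : ~ I 1) (HJ : is_ideal J) (HJp : ~ J 1).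
Hypothesis IJ : sub I J.
Definition liftq (t : QT HI HP) : QT HJ HJp := let _ := IJ in piQ HJ HJp (repr t).
Lemma liftq_pi s : liftq (piQ HI HP s) = piQ HJ HJp s.
Proof.
rewrite /liftq; apply/piQ_eq; apply: IJ; apply/piQ_eq; exact: piQ_surj.
Qed.
Lemma liftq_zmod : zmod_morphism liftq.
Proof.
move=> u v; rewrite -(piQ_surj u) -(piQ_surj v) -rmorphB !liftq_pi.
by rewrite rmorphB.
Qed.
Lemma liftq_monoid : monoid_morphism liftq.
Proof.
split; first by rewrite -(rmorph1 (piQ HI HP)) liftq_pi rmorph1.
move=> u v; rewrite -(piQ_surj u) -(piQ_surj v) -rmorphM !liftq_pi.
by rewrite rmorphM.
Qed.
HB.instance Definition _ := GRing.isZmodMorphism.Build _ _ liftq liftq_zmod.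
HB.instance Definition _ := GRing.isMonoidMorphism.Build _ _ liftq liftq_monoid.
Lemma liftq_piR s : (liftq : {rmorphism QT HI HP -> QT HJ HJp}) (piQ HI HP s) = piQ HJ HJp s.
Proof. exact: liftq_pi. Qed.
End Lift.

Lemma no_nonmax_prime (S : comNzRingType) (I : S -> Prop) (a : S)
  (HI : is_ideal I) (HP : ~ I 1) :
  (forall x y, I (x * y) -> I x \/ I y) -> ~ I a -> ~ addI I a 1 ->
  fl (addI I a) (@full S) -> ~ fl_images_of_injectives (QT HI HP).
Proof.
move=> Hpr nIa HJp [n B] Hfl.
have HJ := addI_ideal a HI.
have IJ : sub I (addI I a) by move=> x Ix; exists x, 0; rewrite mulr0 addr0.
have Ja : addI I a a by exists 0, 1; split; [by case: (HI)|by rewrite add0r mulr1].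
pose g : {rmorphism QT HI HP -> QT HJ HJp} := liftq (HI:=HI) (HP:=HP) HJ HJp IJ.
pose M := @modr _ _ g.
have flM : finite_length M.
  exists n => k N HN Hs; apply: (B k (fun i s => N i (piQ HJ HJp s))); split.
  - move=> i Hi; have [N0 ND NZ] := HN i Hi; split.
    + split.
      * by rewrite rmorph0.
      * by move=> x y Hx Hy; rewrite rmorphD; apply: ND.
      * move=> r s Hs'; move: (NZ (piQ HI HP r) (piQ HJ HJp s : M) Hs').
        by rewrite modr_scaleE /g liftq_piR rmorphM.
    + by move=> s /(piQ0 HJ HJp) ->.
    + by [].
  - move=> i Hi; have [sN [y [Ny1 Ny]]] := Hs i Hi; split.
    + by move=> s; apply: sN.
    + by exists (repr (y : QT HJ HJp)); rewrite piQ_surj.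
have [E [p [Einj psurj]]] := Hfl M flM.
have [e pe] := psurj ((1 : QT HJ HJp) : M).
pose x := piQ HI HP a.
have finj : injective (mulx x).
  move=> u v; rewrite /mulx => /eqP; rewrite -subr_eq0 -mulrBr => /eqP H.
  apply/eqP; rewrite -subr_eq0; apply/eqP.
  move: H; rewrite -(piQ_surj (u - v)) /x -rmorphM => /(piQ0 HI HP).
  case/Hpr => // /(piQ0 HI HP) ->; by [].
have [h Hh] := Einj _ _ (mulx x) (scalev e) finj.
have eh : e = x *: h 1.
  have H : h (mulx x 1) = 1 *: e := Hh 1.
  rewrite scale1r in H; rewrite -H -linearZZ; congr (h _).
have : p e = 0.
  rewrite eh linearZZ.
  have -> : x *: p (h 1) = (g x * (p (h 1) : QT HJ HJp) : QT HJ HJp) by [].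
  rewrite /g /x liftq_piR.
  by have /(piQ0 HJ HJp) -> := Ja; rewrite mul0r.
by rewrite pe => /eqP; rewrite oner_eq0.
Qed.

Lemma bnd_top (S : comNzRingType) (J : S -> Prop) : (forall x, J x) -> bnd J (@full S) 0.
Proof.
move=> HJ k N [H1 H2]; case: k H1 H2 => // k H1 H2.
have [_ [y [_ Ny]]] := H2 0%N (ltn0Sn _).
by have [_ F _] := H1 0%N (leq0n _); case: Ny; apply: F.
Qed.

Lemma full_ideal (S : comNzRingType) : is_ideal (@full S).
Proof. by []. Qed.

Lemma fl_zero (R S : comNzRingType) (phi : {rmorphism R -> S}) :
  (forall s, exists r, phi r = s) -> noetherian R ->
  (forall (S' : comNzRingType) (phi' : {rmorphism R -> S'}),
       (forall s : S', exists r : R, phi' r = s) -> fl_images_of_injectives S') ->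
  fl (fun x : S => x = 0) (@full S).
Proof.
move=> Hs HR Hall; have HS := noeth_image Hs HR.
apply: contrapT => Hn.
have Z0 : is_ideal (fun x : S => x = 0).
  split => //; first by move=> x y -> ->; rewrite addr0.
  by move=> a x ->; rewrite mulr0.
have [I [HI PI Imax]] := noeth_max HS (P := fun I => ~ fl I (@full S))
  (ex_intro _ _ (conj Z0 Hn)).
have [I0 ID IM] := HI.
have bigger : forall J, is_ideal J -> sub I J -> (exists x, J x /\ ~ I x) -> fl J (@full S).
  move=> J HJ IJ [x [Jx nIx]]; apply: contrapT => nfl.
  by apply: nIx; apply: (Imax J HJ IJ nfl).
have HP : ~ I 1.
  move=> I1; apply: PI; exists 0%N; apply: bnd_top => x.
  by rewrite -(mulr1 x); apply: IM.
have Hpr : forall x y, I (x * y) -> I x \/ I y.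
  move=> x y Ixy; apply: contrapT => Hn2.
  have nIx : ~ I x by move=> ?; apply: Hn2; left.
  have nIy : ~ I y by move=> ?; apply: Hn2; right.
  apply: PI; apply: (@fl_split _ I (addI I x)) => //.
  - exact: addI_ideal.
  - by move=> s Is; exists s, 0; rewrite mulr0 addr0.
  - apply: fl_colon => //; apply: bigger.
    + exact: colon_ideal.
    + by move=> s Is; rewrite /colon; apply: IM.
    + by exists y.
  - apply: bigger.
    + exact: addI_ideal.
    + by move=> s Is; exists s, 0; rewrite mulr0 addr0.
    + by exists x; split => //; exists 0, 1; rewrite add0r mulr1.
have Hmax : forall a, ~ I a -> forall s, addI I a s.
  move=> a nIa; apply: contrapT => Hn2.
  have Hp1 : ~ addI I a 1.
    move=> H1; apply: Hn2 => s; rewrite -(mulr1 s).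
    by have [_ _ AM] := addI_ideal a HI; apply: AM.
  have flJ : fl (addI I a) (@full S).
    apply: bigger.
    + exact: addI_ideal.
    + by move=> s Is; exists s, 0; rewrite mulr0 addr0.
    + by exists a; split => //; exists 0, 1; rewrite add0r mulr1.
  apply: (no_nonmax_prime Hpr nIa Hp1 flJ).
  apply: (Hall _ (piQ HI HP \o phi)).
  apply: comp_surj => // t; exists (repr t); exact: piQ_surj.
by apply: PI; exists 1%N; apply: bnd_field.
Qed.

Lemma fl_reg (S : comNzRingType) : fl (fun x : S => x = 0) (@full S) -> finite_length (S^o).
Proof.
move=> [n B]; exists n => k N HN Hs; apply: (B k N); split => //.
move=> i Hi; have [N0 ND NZ] := HN i Hi; split.
- by split => // a x Hx; apply: (NZ a x).
- by move=> x ->.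
- by [].
Qed.

Lemma retract (S : comNzRingType) (E : lmodType S) (p : {linear E -> S^o}) :
  injective_module E -> (forall m, exists e, p e = m) -> self_injective S.
Proof.
move=> Einj psurj; have [e pe] := psurj 1.
move=> A B f g finj.
have [h Hh] := Einj A B f (scalev e \o g) finj.
exists (p \o h) => a /=; rewrite Hh /= /scalev linearZZ pe.
by rewrite /GRing.scale /= mulr1.
Qed.

Section Span.
Variables (S : comNzRingType) (M : lmodType S).

Definition spanf (xs : nat -> M) (i : nat) : M -> Prop :=
  fun y => exists c : nat -> S, y = \sum_(j < i) c j *: xs j.

Lemma spanf_sub xs i : is_submodule (spanf xs i).
Proof.
split.
- by exists (fun _ => 0); rewrite big1 // => j _; rewrite scale0r.
- move=> x y [c ->] [d ->]; exists (fun j => c j + d j).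
  by rewrite -big_split /=; apply: eq_bigr => j _; rewrite scalerDl.
- move=> a x [c ->]; exists (fun j => a * c j).
  by rewrite scaler_sumr; apply: eq_bigr => j _; rewrite scalerA.
Qed.

Lemma spanf_mono xs i y : spanf xs i y -> spanf xs i.+1 y.
Proof.
move=> [c ->]; exists (fun j => if j == i then 0 else c j).
rewrite big_ord_recr /= eqxx scale0r addr0; apply: eq_bigr => j _.
by rewrite ifN // neq_ltn ltn_ord.
Qed.

Lemma spanf_new xs i : spanf xs i.+1 (xs i).
Proof.
exists (fun j => if j == i then 1 else 0).
rewrite big_ord_recr /= eqxx scale1r big1 ?add0r // => j _.
by rewrite ifN ?scale0r // neq_ltn ltn_ord.
Qed.

Lemma spanf_ext xs xs' i : (forall j, (j < i)%N -> xs j = xs' j) ->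
  forall y, spanf xs i y -> spanf xs' i y.
Proof.
move=> E y [c ->]; exists c; apply: eq_bigr => j _; by rewrite E.
Qed.

Lemma fl_fg : finite_length M -> exists i xs, forall m, spanf xs i m.
Proof.
move=> [n B]; apply: contrapT => Hn.
have H : forall (xs : nat -> M) i, exists m, ~ spanf xs i m.
  move=> xs i; apply: contrapT => H'; apply: Hn; exists i, xs => m.
  by apply: contrapT => Hm; apply: H'; exists m.
pose nextm xs i := sval (cid (H xs i)).
have nextmP xs i : ~ spanf xs i (nextm xs i) by rewrite /nextm; case: cid.
pose X := fix X (i : nat) : nat -> M :=
  match i with 0 => fun _ => 0 | i.+1 => fun j => if j == i then nextm (X i) i else X i j end.
have Xst : forall i j, (j < i)%N -> X i j = X j.+1 j.
  elim=> [|i IH] j // Hj; rewrite /=.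
  case: eqP => [->|/eqP Hne]; first by rewrite /= eqxx.
  by apply: IH; rewrite ltn_neqAle Hne -ltnS.
pose xs j := X j.+1 j.
have Hsp : forall i, spanf xs i = spanf (X i) i.
  move=> i; apply: funext => y; apply: propext; split; apply: spanf_ext => j Hj;
  by rewrite /xs Xst.
have Hnew : forall i, ~ spanf xs i (xs i).
  by move=> i; rewrite Hsp /xs /= eqxx; apply: nextmP.
have : (n.+1 <= n)%N.
  apply: (B n.+1 (spanf xs)) => [i _|i Hi]; first exact: spanf_sub.
  split; first exact: spanf_mono.
  by exists (xs i); split; [apply: spanf_new|apply: Hnew].
by rewrite ltnn.
Qed.

End Span.

Section RowLin.
Variables (S : comNzRingType) (n : nat).

Section Coord.
Variables (A : lmodType S) (g : {linear A -> 'rV[S]_n}) (j : 'I_n).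
Definition coordf : A -> S^o := fun a => g a 0 j.
Lemma coordf_lin : linear coordf.
Proof. by move=> a u v; rewrite /coordf linearP !mxE. Qed.
HB.instance Definition _ := GRing.isLinear.Build S A S^o *:%R coordf coordf_lin.
End Coord.

Section Rowf.
Variables (B : lmodType S) (hs : 'I_n -> {linear B -> S^o}).
Definition rowf : B -> 'rV[S]_n := fun b => \row_j hs j b.
Lemma rowf_lin : linear rowf.
Proof. by move=> a u v; apply/rowP => j; rewrite /rowf !mxE linearP. Qed.
HB.instance Definition _ := GRing.isLinear.Build S B 'rV[S]_n *:%R rowf rowf_lin.
End Rowf.

Section Comb.
Variables (M : lmodType S) (xs : nat -> M).
Definition combf : 'rV[S]_n -> M := fun v => \sum_(j < n) v 0 j *: xs j.
Lemma combf_lin : linear combf.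
Proof.
move=> a u v; rewrite /combf scaler_sumr -big_split /=; apply: eq_bigr => j _.
by rewrite !mxE scalerDl scalerA.
Qed.
HB.instance Definition _ := GRing.isLinear.Build S 'rV[S]_n M *:%R combf combf_lin.
End Comb.

Lemma rV_inj : self_injective S -> injective_module 'rV[S]_n.
Proof.
move=> Sinj A B f g finj.
have H : forall j, exists hj : {linear B -> S^o}, forall a, hj (f a) = coordf g j a.
  by move=> j; apply: Sinj.
pose hs j := sval (cid (H j)).
have hsP j a : hs j (f a) = coordf g j a by rewrite /hs; case: cid.
exists (rowf hs) => a; apply/rowP => j; rewrite /rowf mxE hsP /coordf.
by [].
Qed.

End RowLin.

Lemma qf_fl (S : comNzRingType) : QF S -> fl_images_of_injectives S.
Proof.
move=> [_ Sinj] M flM.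
have [n [xs Hxs]] := fl_fg flM.
exists 'rV[S]_n, (@combf S n M xs); split; first exact: rV_inj.
move=> m; have [c ->] := Hxs m; exists (\row_(j < n) c j).
by rewrite /combf; apply: eq_bigr => j _; rewrite mxE.
Qed.


Unset Implicit Arguments.

(* Factor rings of R are represented as rings S with a surjective ring
   morphism R -> S (S is then isomorphic to R / ker). *)
Theorem mainTheorem14 (R : comNzRingType) :
  noetherian R ->
  ((forall (S : comNzRingType) (phi : {rmorphism R -> S}),
       (forall s : S, exists r : R, phi r = s) -> fl_images_of_injectives S)
   <->
   (forall (S : comNzRingType) (phi : {rmorphism R -> S}),
       (forall s : S, exists r : R, phi r = s) -> QF S)).
Proof.
move=> HR; split.
- move=> Hall S phi Hs; split; first exact: (noeth_image Hs HR).
  have fl0 := fl_zero Hs HR Hall.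
  have [E [p [Einj psurj]]] := Hall S phi Hs (S^o) (fl_reg fl0).
  exact: (retract Einj psurj).
- by move=> Hqf S phi Hs; apply: qf_fl; apply: (Hqf S phi Hs).
Qed.
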